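(* The equation $x^4+9x^2y^2+27y^4=z^2$ has no solution $(x,y,z)\in\mathbb{Z}^3$ with $x,y,z$ all nonzero. *)

(* Defs.v *)
From Stdlib Require Import ZArith Lia.

(* Main.v *)
Require Import Defs.
From Stdlib Require Import ZArith Znumtheory Lia.
Open Scope Z_scope.

Definition cop (u v : Z) := forall d, prime d -> (d | u) -> (d | v) -> False.

Lemma prime_div_ex : forall n, 1 < n -> exists p, prime p /\ (p | n).
Proof.
  intros n Hn. assert (0 <= n) by lia. revert Hn. pattern n. apply Z_lt_induction; [|lia].
  intros n0 IH Hn. clear H n. rename n0 into n.
  destruct (prime_dec n) as [Hp|Hp].
  - exists n. split; auto. apply Z.divide_refl.
  - destruct (not_prime_divide n Hn Hp) as [m [Hm Hmn]].
    destruct (IH m ltac:(lia) ltac:(lia)) as [p [Hp1 Hp2]].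
    exists p. split; auto. eapply Z.divide_trans; eauto.
Qed.

Lemma cop_rel : forall u v, cop u v -> u <> 0 -> rel_prime u v.
Proof.
  intros u v H Hu. unfold rel_prime.
  assert (Hg := Zgcd_is_gcd u v).
  assert (H0 := Z.gcd_nonneg u v).
  assert (Z.gcd u v <> 0) by (rewrite Z.gcd_eq_0; tauto).
  destruct (Z.eq_dec (Z.gcd u v) 1) as [E|E]; [rewrite <- E; auto|].
  destruct (prime_div_ex (Z.gcd u v) ltac:(lia)) as [p [Hp Hpg]].
  exfalso. apply (H p Hp).
  - eapply Z.divide_trans; [exact Hpg| apply Z.gcd_divide_l].
  - eapply Z.divide_trans; [exact Hpg| apply Z.gcd_divide_r].
Qed.

Lemma prime_div_pow4 : forall d w, prime d -> (d | w^4) -> (d | w).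
Proof.
  intros d w Hd H. replace (w^4) with (w*(w*(w*w))) in H by ring.
  repeat (apply prime_mult in H; [|auto]; destruct H as [H|H]; [auto|]). auto.
Qed.

Lemma prime_div_sq : forall d w, prime d -> (d | w*w) -> (d | w).
Proof.
  intros d w Hd H. apply prime_mult in H; tauto.
Qed.

Lemma prime_div_27 : forall d, prime d -> (d | 27) -> d = 3.
Proof.
  intros d Hd H. replace 27 with (3*(3*3)) in H by ring.
  repeat (apply prime_mult in H; [|auto]; destruct H as [H|H];
    [apply prime_div_prime; auto; apply prime_3|]).
  apply prime_div_prime; auto; apply prime_3.
Qed.

Lemma cop_sym : forall u v, cop u v -> cop v u.
Proof. unfold cop; eauto. Qed.

Lemma cop_opp : forall u v, cop u v -> cop (-u) (-v).
Proof. unfold cop; intros u v H d Hd H1 H2.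
  apply (H d Hd); apply Z.divide_opp_r; auto. Qed.

Lemma pow4_lemma : forall w, 0 <= w -> forall u v, 0 < u -> 0 < v -> cop u v ->
  u * v = w^4 -> exists a, u = a^4.
Proof.
  intros w Hw. pose proof Hw as Hw0. revert Hw. pattern w. apply Z_lt_induction; [|lia]. clear w Hw0.
  intros w IH Hw u v Hu Hv Hc E.
  destruct (Z.lt_ge_cases 1 w) as [Hw1|Hw1].
  2:{ assert (w = 0 \/ w = 1) as [->| ->] by lia; [lia|].
      exists 1. nia. }
  destruct (prime_div_ex w Hw1) as [p [Hp [w' ->]]].
  assert (Hp2 := prime_ge_2 p Hp).
  assert (Hw' : 0 <= w' < w' * p) by nia.
  assert (Hpuv : (p | u * v)) by (rewrite E; exists (w'^4 * p^3); ring).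
  assert (Hrel : forall t, ~ (p | t) -> rel_prime (p^4) t).
  { intros t Ht. apply cop_rel; [|lia].
    intros d Hd H1 H2. apply prime_div_pow4 in H1; auto.
    apply prime_div_prime in H1; auto. subst. auto. }
  assert (H4 : (p^4 | u * v)) by (rewrite E; exists (w'^4); ring).
  destruct (prime_mult p Hp u v Hpuv) as [Hu'|Hv'].
  - assert (~ (p | v)) by (intro; apply (Hc p); auto).
    assert ((p^4 | u)) as [u' ->].
    { apply Gauss with v; [rewrite Z.mul_comm; auto| apply Hrel; auto]. }
    assert (u' * v = w'^4).
    { apply Z.mul_cancel_l with (p^4); [lia|]. rewrite Z.pow_mul_l in E. lia. }
    destruct (IH w' Hw' ltac:(lia) u' v ltac:(nia) Hv) as [a Ha]; auto.
    { intros d Hd H1 H2. apply (Hc d Hd); auto. apply Z.divide_mul_l; auto. }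
    exists (a*p). subst. ring.
  - assert (~ (p | u)) by (intro; apply (Hc p); auto).
    assert ((p^4 | v)) as [v' ->].
    { apply Gauss with u; [auto| apply Hrel; auto]. }
    assert (u * v' = w'^4).
    { apply Z.mul_cancel_l with (p^4); [lia|]. rewrite Z.pow_mul_l in E. lia. }
    destruct (IH w' Hw' ltac:(lia) u v' Hu ltac:(nia)) as [a Ha]; auto.
    { intros d Hd H1 H2. apply (Hc d Hd); auto. apply Z.divide_mul_l; auto. }
    exists a. auto.
Qed.
Lemma sq_inj : forall s t, 0 <= s -> 0 <= t -> s*s = t*t -> s = t.
Proof. intros. nia. Qed.

Lemma div3 : forall p q, ~ (3 | q) -> (3 | p * q) -> exists p', p = 3 * p'.
Proof.
  intros p q Hq H. apply prime_mult in H; [|apply prime_3].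
  destruct H as [[k Hk]|H]; [exists k; lia|tauto].
Qed.

Lemma pow4_abs : forall u v m, 0 < u -> 0 < v -> cop u v -> u * v = m^4 -> exists a, u = a^4.
Proof.
  intros u v m Hu Hv Hc E. apply (pow4_lemma (Z.abs m) ltac:(lia) u v); auto.
  rewrite E. apply Z.pow_even_abs. exists 2. reflexivity.
Qed.

Lemma split27_1 : forall p q m, 0 < p -> 0 < q -> cop p q -> ~ (3 | q) -> p * q = 27 * m^4 ->
  exists a b, cop a b /\ m*m = a*a*(b*b) /\ p = 27*b^4 /\ q = a^4.
Proof.
  intros p q m Hp Hq Hc H3 E.
  destruct (div3 p q H3) as [p1 ->]. { rewrite E. exists (9*m^4). ring. }
  destruct (div3 p1 q H3) as [p2 ->]. { exists (3*m^4). lia. }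
  destruct (div3 p2 q H3) as [p3 ->]. { exists (m^4). lia. }
  assert (E' : p3 * q = m^4) by lia.
  assert (Hc' : cop p3 q).
  { intros d Hd H1 H2. apply (Hc d Hd); auto.
    apply Z.divide_mul_r. apply Z.divide_mul_r. apply Z.divide_mul_r. auto. }
  destruct (pow4_abs p3 q m ltac:(lia) Hq Hc' E') as [b Hb].
  destruct (pow4_abs q p3 m Hq ltac:(lia) (cop_sym _ _ Hc') ltac:(lia)) as [a Ha].
  exists a, b. split; [|split; [|split]].
  - intros d Hd H1 H2. apply (Hc' d Hd).
    + rewrite Hb. apply Z.divide_mul_l. auto.
    + rewrite Ha. apply Z.divide_mul_l. auto.
  - apply sq_inj; try nia.
  - lia.
  - auto.
Qed.

Lemma split27 : forall p q m, 0 < p -> 0 < q -> cop p q -> p * q = 27 * m^4 ->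
  exists a b, cop a b /\ m*m = a*a*(b*b) /\
    ((p = 27*b^4 /\ q = a^4) \/ (p = a^4 /\ q = 27*b^4)).
Proof.
  intros p q m Hp Hq Hc E.
  destruct (Zdivide_dec 3 q) as [H3|H3].
  - assert (~ (3 | p)) by (intro; apply (Hc 3 prime_3); auto).
    destruct (split27_1 q p m Hq Hp (cop_sym _ _ Hc) H ltac:(lia)) as [a [b [Hab [Hm [E1 E2]]]]].
    exists a, b. auto.
  - destruct (split27_1 p q m Hp Hq Hc H3 E) as [a [b [Hab [Hm [E1 E2]]]]].
    exists a, b. auto.
Qed.

Lemma par : forall z, exists l, z = 2*l \/ z = 2*l+1.
Proof. intros z. destruct (Z.Even_or_Odd z) as [[l H]|[l H]]; exists l; lia. Qed.

Lemma sq8 : forall z, exists l, z*z = 8*l \/ z*z = 8*l+1 \/ z*z = 8*l+4.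
Proof.
  intros z. destruct (par z) as [l [->| ->]]; destruct (par l) as [k [->| ->]].
  - exists (2*k*k). lia.
  - exists (2*k*k+2*k). lia.
  - exists (2*k*k+k). lia.
  - exists (2*k*k+3*k+1). lia.
Qed.

Lemma sq3 : forall x, ~ (3 | x) -> exists k, x*x = 3*k+1.
Proof.
  intros x H. assert (Hd := Z.div_mod x 3 ltac:(lia)).
  assert (Hb := Z.mod_pos_bound x 3 ltac:(lia)).
  set (q := x / 3) in *. set (r := x mod 3) in *.
  assert (r = 0 \/ r = 1 \/ r = 2) as [E|[E|E]] by lia.
  - exfalso. apply H. exists q. lia.
  - exists (3*q*q + 2*q). subst r. nia.
  - exists (3*q*q + 4*q + 1). subst r. nia.
Qed.

Definition Sol x y z := x <> 0 /\ y <> 0 /\ z <> 0 /\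
       x ^ 4 + 9 * x ^ 2 * y ^ 2 + 27 * y ^ 4 = z ^ 2.

Lemma dvd_sq : forall d w, prime d -> (d | w*w) -> exists w', w = d * w'.
Proof. intros d w Hd H. apply prime_div_sq in H; auto. destruct H as [k Hk]. exists k. lia. Qed.

Lemma step_cop : forall x y z, Sol x y z -> 0 < z -> cop x y ->
  exists x' y' z', Sol x' y' z' /\ y' * y' < y * y.
Proof.
  intros x y z [Hx [Hy [Hz E]]] Hzp Hc.
  assert (E' : (x*x)*(x*x) + 9*(x*x)*(y*y) + 27*(y*y)*(y*y) = z*z) by lia.
  assert (H3x : ~ (3 | x)).
  { intros [w ->].
    destruct (dvd_sq 3 z prime_3) as [t ->].
    { exists (27*w^4 + 27*w*w*y*y + 9*y^4). lia. }
    destruct (dvd_sq 3 t prime_3) as [s ->].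
    { exists (3*w^4 + 3*w*w*y*y + y^4). lia. }
    apply (Hc 3 prime_3). { exists w. lia. }
    apply prime_div_pow4; [apply prime_3|].
    exists (s*s - w^4 - w*w*y*y). lia. }
  destruct (par x) as [i [Ex|Ex]].
  { exfalso. destruct (par y) as [j [Ey|Ey]].
    - apply (Hc 2 prime_2); [exists i| exists j]; lia.
    - destruct (sq8 z) as [l Hl]. subst. lia. }
  destruct (par y) as [m [Ey|Ey]].
  2:{ exfalso. destruct (sq8 x) as [A HA]. destruct (sq8 y) as [B HB].
      destruct (sq8 z) as [C HC].
      assert (Hxo : x*x = 8*A+1).
      { destruct HA as [HA|[HA|HA]]; [|auto|]; exfalso; clear -Ex HA; subst; lia. }
      assert (Hyo : y*y = 8*B+1).
      { destruct HB as [HB|[HB|HB]]; [|auto|]; exfalso; clear -Ey HB; subst; lia. }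
      rewrite Hxo, Hyo in E'. clear -E' HC. lia. }
  destruct (par z) as [l [Ez|Ez]].
  { exfalso. clear -E' Ex Ey Ez. subst. lia. }
  set (p := l - 2*i*i - 2*i - 9*m*m).
  set (q := l + 2*i*i + 2*i + 1 + 9*m*m).
  assert (Id : 4*(p*q - 27*m^4) = z*z - ((x*x)*(x*x) + 9*(x*x)*(y*y) + 27*(y*y)*(y*y)))
    by (subst p q x y z; ring).
  assert (Epq : p * q = 27 * m^4) by (clear -Id E'; lia).
  assert (Hqp : q - p = x*x + 18*m*m) by (subst p q x; ring).
  assert (Hzpq : z = p + q) by (subst p q z; ring).
  assert (Hqdef : q = l + 2*i*i + 2*i + 1 + 9*m*m) by reflexivity.
  clearbody p q.
  assert (Hm : m <> 0) by lia.
  assert (Hi : 0 <= i*i + i) by (clear; destruct (Z.lt_ge_cases i 0); nia).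
  assert (Hq : 0 < q) by (rewrite Hqdef; clear -Hi Ez Hzp; nia).
  assert (Hp : 0 < p) by (clear -Hq Epq Hm; assert (0 < m*m) by nia; assert (0 < m^4) by nia; nia).
  assert (Hcpq : cop p q).
  { intros d Hd H1 H2.
    assert (Hdz : (d | z)) by (rewrite Hzpq; apply Z.divide_add_r; auto).
    assert (Hdx : (d | x*x + 18*m*m)) by (rewrite <- Hqp; apply Z.divide_sub_r; auto).
    assert (Hd27 : (d | 27 * m^4)) by (rewrite <- Epq; apply Z.divide_mul_l; auto).
    apply prime_mult in Hd27; auto. destruct Hd27 as [Hd27|Hdm].
    - apply prime_div_27 in Hd27; auto. subst d. apply H3x. apply prime_div_sq; [apply prime_3|].
      replace (x*x) with ((x*x+18*m*m) + 3*(-6*m*m)) by ring.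
      apply Z.divide_add_r; auto. apply Z.divide_factor_l.
    - apply prime_div_pow4 in Hdm; auto. apply (Hc d Hd).
      + apply prime_div_sq; auto.
        replace (x*x) with ((x*x+18*m*m) + m*(-18*m)) by ring.
        apply Z.divide_add_r; auto. apply Z.divide_mul_l; auto.
      + rewrite Ey. apply Z.divide_mul_r; auto. }
  destruct (split27 p q m Hp Hq Hcpq Epq) as [a [b [Hab [Hmab [[Ep Eq]|[Ep Eq]]]]]].
  2:{ exfalso. destruct (sq3 x H3x) as [k Hk].
      assert (Hx2 : x*x = 27*b^4 - a^4 - 18*(a*a)*(b*b)) by (clear -Hqp Ep Eq Hmab; lia).
      destruct (Zdivide_dec 3 a) as [[t Ht]|Ha].
      - subst a. clear -Hx2 Hk. lia.
      - destruct (sq3 a Ha) as [j Hj].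
        assert (a^4 = (a*a)*(a*a)) by ring. rewrite Hj in *. clear -Hx2 Hk H. lia. }
  set (c := a*a - 9*b*b).
  assert (Hx2 : x*x = a^4 - 27*b^4 - 18*(a*a)*(b*b)) by (clear -Hqp Ep Eq Hmab; lia).
  assert (Ec : c*c = x*x + 108*b^4) by (subst c; rewrite Hx2; ring).
  assert (Hcdef : c = a*a - 9*b*b) by reflexivity.
  clearbody c.
  destruct (par c) as [h [Ec2|Ec2]].
  { exfalso. rewrite Ec2 in Ec. clear -Ec Ex. subst x. lia. }
  set (r := h - i). set (s := h + i + 1).
  assert (Ers : r * s = 27 * b^4) by (subst r s; rewrite Ec2 in Ec; clear -Ec Ex; subst x; lia).
  assert (Hxrs : x = s - r) by (subst r s; clear -Ex; lia).
  assert (Hcrs0 : c = r + s) by (subst r s; clear -Ec2; lia).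
  clearbody r s.
  assert (Hb : b <> 0) by (intro; subst b; clear -Hmab Hm; nia).
  assert (Hcrs : cop r s).
  { intros d Hd H1 H2.
    assert (Hdx : (d | x)) by (rewrite Hxrs; apply Z.divide_sub_r; auto).
    assert (Hdc : (d | c)) by (rewrite Hcrs0; apply Z.divide_add_r; auto).
    assert (Hd27 : (d | 27 * b^4)) by (rewrite <- Ers; apply Z.divide_mul_l; auto).
    apply prime_mult in Hd27; auto. destruct Hd27 as [Hd27|Hdb].
    - apply prime_div_27 in Hd27; auto. subst d. auto.
    - apply prime_div_pow4 in Hdb; auto. apply (Hab d Hd); auto.
      apply prime_div_sq; auto.
      replace (a*a) with (c + b*(9*b)) by (rewrite Hcdef; ring).
      apply Z.divide_add_r; auto. apply Z.divide_mul_l; auto. }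
  assert (Hb4 : 0 < 27 * b^4) by (clear -Hb; assert (0 < b*b) by nia; nia).
  assert (Ha : a <> 0) by (intro; subst a; clear -Eq Hq; lia).
  destruct (Z.lt_ge_cases 0 r) as [Hr|Hr].
  - assert (Hs : 0 < s) by (clear -Hr Ers Hb4; nia).
    destruct (split27 r s b Hr Hs Hcrs Ers) as [e [f [Hef [Hbef Hcase]]]].
    assert (Hsum : r + s = 27*f^4 + e^4) by (clear -Hcase; destruct Hcase as [[-> ->]|[-> ->]]; lia).
    assert (Hf : f <> 0) by (intro; subst f; clear -Hbef Hb; nia).
    assert (He : e <> 0) by (intro; subst e; clear -Hbef Hb; nia).
    exists e, f, a. split.
    + split; [auto|split; [auto|split; [auto|]]].
      clear -Hsum Hcrs0 Hcdef Hbef. lia.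
    + clear -Ey Hmab Hbef Ha He Hf.
      assert (1 <= a*a) by nia. assert (1 <= e*e) by nia. assert (1 <= f*f) by nia.
      subst y. rewrite Hbef in Hmab. nia.
  - exfalso.
    assert (Hr0 : r <> 0) by (intro; subst r; clear -Ers Hb4; lia).
    assert (Hr' : 0 < -r) by (clear -Hr Hr0; lia).
    assert (Hs' : 0 < -s) by (clear -Hr' Ers Hb4; nia).
    destruct (split27 (-r) (-s) b Hr' Hs' (cop_opp _ _ Hcrs) ltac:(clear -Ers; lia)) as [e [f [Hef [Hbef Hcase]]]].
    assert (Hsum : -r + -s = 27*f^4 + e^4) by (clear -Hcase; destruct Hcase as [[-> ->]|[-> ->]]; lia).
    assert (Hf : f <> 0) by (intro; subst f; clear -Hbef Hb; nia).
    assert (Hfin : a*a + e^4 + 27*f^4 - 9*(e*e)*(f*f) = 0) by (clear -Hsum Hcrs0 Hcdef Hbef; lia).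
    clear -Hfin Hf.
    assert (0 < f*f) by nia. assert (0 < f^4) by (replace (f^4) with ((f*f)*(f*f)) by ring; nia).
    assert (0 <= (2*e*e - 9*f*f)*(2*e*e - 9*f*f)) by apply Z.square_nonneg.
    assert (0 <= a*a) by apply Z.square_nonneg.
    assert (Hid : 4*(a*a + e^4 + 27*f^4 - 9*(e*e)*(f*f)) = 4*(a*a) + (2*e*e - 9*f*f)*(2*e*e - 9*f*f) + 27*f^4) by ring.
    lia.
Qed.

Lemma step : forall x y z, Sol x y z -> exists x' y' z', Sol x' y' z' /\ y' * y' < y * y.
Proof.
  intros x y z HS.
  assert (HS' : Sol x y (Z.abs z)).
  { destruct HS as [Hx [Hy [Hz E]]]. split; [auto|split; [auto|split; [lia|]]].
    rewrite E. destruct (Z.abs_spec z) as [[_ ->]|[_ ->]]; ring. }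
  clear HS. rename HS' into HS.
  assert (Hzp : 0 < Z.abs z) by (destruct HS as [_ [_ [Hz _]]]; lia).
  set (z' := Z.abs z) in *. clearbody z'. clear z. rename z' into z.
  destruct (Z.eq_dec (Z.gcd x y) 1) as [G|G].
  - apply (step_cop x y z); auto.
    intros d Hd H1 H2. assert (H3 := Z.gcd_greatest x y d H1 H2). rewrite G in H3.
    apply Z.divide_1_r in H3. assert (H4 := prime_ge_2 d Hd). lia.
  - destruct HS as [Hx [Hy [Hz E]]].
    assert (H0 := Z.gcd_nonneg x y).
    assert (Z.gcd x y <> 0) by (rewrite Z.gcd_eq_0; tauto).
    destruct (prime_div_ex (Z.gcd x y) ltac:(lia)) as [p [Hp Hpg]].
    assert (Hp2 := prime_ge_2 p Hp).
    destruct (Z.divide_trans _ _ _ Hpg (Z.gcd_divide_l x y)) as [x1 Ex].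
    destruct (Z.divide_trans _ _ _ Hpg (Z.gcd_divide_r x y)) as [y1 Ey].
    set (K := x1^4 + 9*x1^2*y1^2 + 27*y1^4).
    assert (EK : z*z = p*p*(p*p*K)) by (transitivity (z^2); [ring|]; rewrite <- E; subst K x y; ring).
    assert (HKdef : K = x1^4 + 9*x1^2*y1^2 + 27*y1^4) by reflexivity.
    clearbody K. clear E.
    destruct (dvd_sq p z Hp) as [z1 Ez1]. { exists (p*p*p*K). clear -EK. lia. }
    assert (E1 : z1*z1 = p*p*K).
    { apply Z.mul_cancel_l with (p*p); [clear -Hp2; nia|]. subst z. clear -EK. lia. }
    destruct (dvd_sq p z1 Hp) as [z2 Ez2]. { exists (p*K). clear -E1. lia. }
    assert (E2 : z2*z2 = K).
    { apply Z.mul_cancel_l with (p*p); [clear -Hp2; nia|]. subst z1. clear -E1. lia. }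
    exists x1, y1, z2. split.
    + split; [intro; subst; lia|split; [intro; subst; lia|split; [intro; subst; lia|]]].
      rewrite HKdef in E2. rewrite <- E2. ring.
    + subst y. assert (Hy1 : y1 <> 0) by (intro; subst; lia). clear -Hp2 Hy1. assert (0 < y1*y1) by nia. assert (4 <= p*p) by nia. replace (y1*p*(y1*p)) with ((y1*y1)*(p*p)) by ring. nia.
Qed.

Lemma no_sol : forall n, 0 <= n -> forall x y z, y*y = n -> Sol x y z -> False.
Proof.
  intros n Hn. pattern n. apply Z_lt_induction; [|auto].
  intros n0 IH x y z Hy HS.
  destruct (step x y z HS) as [x' [y' [z' [HS' Hlt]]]].
  apply (IH (y'*y')) with x' y' z'; auto.
  split; [apply Z.square_nonneg|lia].
Qed.

Theorem mainTheorem2 :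
  ~ (exists x y z : Z,
       x <> 0 /\ y <> 0 /\ z <> 0 /\
       x ^ 4 + 9 * x ^ 2 * y ^ 2 + 27 * y ^ 4 = z ^ 2).
Proof.
  intros [x [y [z H]]].
  apply (no_sol (y*y) (Z.square_nonneg y) x y z eq_refl H).
Qed.
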